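(* Assume Case (I) or Case (II) holds. Let $\mathbf y^\sharp$ be any solution of $\mathbf z=\mathbf H\mathbf y$, let $r>0$, and let $\mathcal M^\sharp(r)=\{\mathbf w\in\mathbb R^m:\|\mathbf w-\mathbf y^\sharp\|\le r\}$. Then, for any graph signal and weights satisfying the Weights Assumption and any $K>0$: (i) $(\mathcal M^\sharp(r))^N=\mathcal M^\sharp(r)\times\cdots\times\mathcal M^\sharp(r)$ is a positively invariant set for the ''consensus + projection'' flow; (ii) $(\mathcal M^\sharp(r))^N\cap(\mathcal A_1\times\cdots\times\mathcal A_N)$ is a positively invariant set for the ''projection consensus'' flow.
   Context: Setting: $N,m\ge 1$; $\mathbf H\in\mathbb R^{N\times m}$ has rows $\mathbf h_1^{T},\dots,\mathbf h_N^{T}$ with $\|\mathbf h_i\|=1$ for all $i$; $\mathbf z=(z_1,\dots,z_N)^T\in\mathbb R^N$; the equation is $\mathbf z=\mathbf H\mathbf y$. Let $\mathcal A_i=\{\mathbf y\in\mathbb R^m:\mathbf h_i^T\mathbf y=z_i\}$ with Euclidean projection $\mathcal P_{\mathcal A_i}(\mathbf y)=(I-\mathbf h_i\mathbf h_i^T)\mathbf y+z_i\mathbf h_i$. Case (I): $\mathrm{rank}(\mathbf H)=m$ and $\mathbf z$ in the column space of $\mathbf H$. Case (II): $\mathrm{rank}(\mathbf H)<m$ and $\mathbf z$ in the column space of $\mathbf H$. Network: $\mathrm V=\{1,\dots,N\}$; a graph signal assigns to each $t\ge0$ a digraph $\mathrm G_{\sigma(t)}=(\mathrm V,\mathrm E_{\sigma(t)})$,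 $\mathrm N_i(t)=\{j:(j,i)\in\mathrm E_{\sigma(t)}\}$; Weights Assumption: $a_{ij}:[0,\infty)\to(0,\infty)$ continuous except on a Lebesgue-null set and bounded by some $a^\ast>0$. Flows: ''consensus + projection'': $\dot{\mathbf x}_i=K\sum_{j\in\mathrm N_i(t)}a_{ij}(t)(\mathbf x_j-\mathbf x_i)+\mathcal P_{\mathcal A_i}(\mathbf x_i)-\mathbf x_i$; ''projection consensus'': $\dot{\mathbf x}_i=\sum_{j\in\mathrm N_i(t)}a_{ij}(t)\big(\mathcal P_{\mathcal A_i}(\mathbf x_j)-\mathcal P_{\mathcal A_i}(\mathbf x_i)\big)$, $i\in\mathrm V$. A set $\Omega\subset(\mathbb R^m)^N$ is positively invariant if every trajectory with $\mathbf x(t_0)\in\Omega$ satisfies $\mathbf x(t)\in\Omega$ for all $t\ge t_0$. *)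

(* Defs.v *)
From Stdlib Require Import Reals Lra Lia.
Open Scope R_scope.

(* Vectors in R^m are functions nat -> R, only indices k < m are meaningful.
   A configuration of the network (element of (R^m)^N) is x : nat -> nat -> R,
   x i k = k-th coordinate of agent i's state (i < N, k < m). *)

Fixpoint rsum (n : nat) (f : nat -> R) : R :=
  match n with
  | O => 0
  | S p => rsum p f + f p
  end.

Definition dot (m : nat) (u v : nat -> R) : R := rsum m (fun k => u k * v k).

Definition dist2 (m : nat) (u v : nat -> R) : R :=
  rsum m (fun k => (u k - v k) ^ 2).

Definition mat_vec (m : nat) (H : nat -> nat -> R) (y : nat -> R) : nat -> R :=
  fun i => dot m (H i) y.

(* Euclidean projection onto A_i = {y | h_i^T y = z_i} (with ||h_i|| = 1):
   P_{A_i}(y) = (I - h_i h_i^T) y + z_i h_i *)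
Definition projA (m : nat) (H : nat -> nat -> R) (z : nat -> R) (i : nat)
    (y : nat -> R) : nat -> R :=
  fun k => y k - H i k * dot m (H i) y + z i * H i k.

Definition inA (m : nat) (H : nat -> nat -> R) (z : nat -> R) (i : nat)
    (y : nat -> R) : Prop := dot m (H i) y = z i.

Definition null_set (S : R -> Prop) : Prop :=
  forall eps, 0 < eps ->
    exists c d : nat -> R,
      (forall n, c n <= d n) /\
      (forall p, rsum p (fun n => d n - c n) <= eps) /\
      (forall t, S t -> exists n, c n < t < d n).

(* absolute continuity of f on [a,b] : for finite families of pairwise
   disjoint subintervals [u_l, v_l] (listed in increasing order) *)
Definition abs_continuous_on (f : R -> R) (a b : R) : Prop :=
  forall eps, 0 < eps -> exists delta, 0 < delta /\
    forall (p : nat) (u v : nat -> R),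
      (forall l, (l < p)%nat -> a <= u l /\ u l <= v l /\ v l <= b) ->
      (forall l, (S l < p)%nat -> v l <= u (S l)) ->
      rsum p (fun l => v l - u l) < delta ->
      rsum p (fun l => Rabs (f (v l) - f (u l))) < eps.

(* Graph signal: for each time t the digraph G_sigma(t) on V = {0..N-1},
   given by its edge relation: E t j i = true  iff  (j,i) in E_sigma(t),
   i.e. j in N_i(t). *)
Definition graph_signal := R -> nat -> nat -> bool.

Definition weights := nat -> nat -> R -> R.

Definition weights_assumption (N : nat) (a : weights) : Prop :=
  exists astar, 0 < astar /\
    forall i j, (i < N)%nat -> (j < N)%nat ->
      (forall t, 0 <= t -> 0 < a i j t <= astar) /\
      exists S, null_set S /\
        forall t, 0 < t -> ~ S t -> continuity_pt (a i j) t.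

Definition nbr_sum (N : nat) (E : graph_signal) (i : nat) (t : R)
    (g : nat -> R) : R :=
  rsum N (fun j => if E t j i then g j else 0).

Definition vfield := R -> (nat -> nat -> R) -> nat -> nat -> R.

Definition cons_proj_field (N m : nat) (H : nat -> nat -> R) (z : nat -> R)
    (E : graph_signal) (a : weights) (K : R) : vfield :=
  fun t x i k =>
    K * nbr_sum N E i t (fun j => a i j t * (x j k - x i k))
    + (projA m H z i (x i) k - x i k).

Definition proj_cons_field (N m : nat) (H : nat -> nat -> R) (z : nat -> R)
    (E : graph_signal) (a : weights) : vfield :=
  fun t x i k =>
    nbr_sum N E i t
      (fun j => a i j t * (projA m H z i (x j) k - projA m H z i (x i) k)).

(* Trajectory (Caratheodory solution) of dx/dt = F(t,x) starting at time t0,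
   defined on [t0, +oo): every coordinate is absolutely continuous on every
   compact [t0,T] and satisfies the ODE for almost every t > t0. *)
Definition trajectory (N m : nat) (F : vfield) (t0 : R)
    (x : R -> nat -> nat -> R) : Prop :=
  (forall i k, (i < N)%nat -> (k < m)%nat ->
     forall T, t0 <= T -> abs_continuous_on (fun t => x t i k) t0 T) /\
  exists S, null_set S /\
    forall t, t0 < t -> ~ S t ->
      forall i k, (i < N)%nat -> (k < m)%nat ->
        derivable_pt_lim (fun s => x s i k) t (F t (x t) i k).

Definition positively_invariant (N m : nat) (F : vfield)
    (Omega : (nat -> nat -> R) -> Prop) : Prop :=
  forall (t0 : R) (x : R -> nat -> nat -> R),
    0 <= t0 -> trajectory N m F t0 x -> Omega (x t0) ->
    forall t, t0 <= t -> Omega (x t).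

Definition ballN (N m : nat) (ys : nat -> R) (r : R)
    (x : nat -> nat -> R) : Prop :=
  forall i, (i < N)%nat -> dist2 m (x i) ys <= r ^ 2.

Definition ballN_A (N m : nat) (H : nat -> nat -> R) (z : nat -> R)
    (ys : nat -> R) (r : R) (x : nat -> nat -> R) : Prop :=
  ballN N m ys r x /\ forall i, (i < N)%nat -> inA m H z i (x i).

(* Main.v *)
Require Import Defs.
From Stdlib Require Import Reals Lra Lia Classical.
Open Scope R_scope.

Lemma rsum_ext n f g : (forall k, (k < n)%nat -> f k = g k) -> rsum n f = rsum n g.
Proof. induction n; simpl; intros; auto. rewrite IHn by (intros; apply H; lia). rewrite H by lia. auto. Qed.

Lemma rsum_le n f g : (forall k, (k < n)%nat -> f k <= g k) -> rsum n f <= rsum n g.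
Proof. induction n; simpl; intros; [lra|]. assert (f n <= g n) by (apply H; lia).
  assert (rsum n f <= rsum n g) by (apply IHn; intros; apply H; lia). lra. Qed.

Lemma rsum_plus n f g : rsum n (fun k => f k + g k) = rsum n f + rsum n g.
Proof. induction n; simpl; [lra|]. rewrite IHn. lra. Qed.

Lemma rsum_minus n f g : rsum n (fun k => f k - g k) = rsum n f - rsum n g.
Proof. induction n; simpl; [lra|]. rewrite IHn. lra. Qed.

Lemma rsum_scal n c f : rsum n (fun k => c * f k) = c * rsum n f.
Proof. induction n; simpl; [lra|]. rewrite IHn. lra. Qed.

Lemma rsum_zero n : rsum n (fun _ => 0) = 0.
Proof. induction n; simpl; [lra|]. rewrite IHn. lra. Qed.

Lemma rsum_nonneg n f : (forall k, (k < n)%nat -> 0 <= f k) -> 0 <= rsum n f.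
Proof. intros. rewrite <- (rsum_zero n). apply rsum_le. auto. Qed.

Lemma rsum_nonpos n f : (forall k, (k < n)%nat -> f k <= 0) -> rsum n f <= 0.
Proof. intros. rewrite <- (rsum_zero n). apply rsum_le. auto. Qed.

Lemma rsum_abs n f : Rabs (rsum n f) <= rsum n (fun k => Rabs (f k)).
Proof. induction n; simpl. rewrite Rabs_R0; lra.
  eapply Rle_trans. apply Rabs_triang. lra. Qed.

Lemma rsum_swap n m (f : nat -> nat -> R) :
  rsum n (fun i => rsum m (fun k => f i k)) = rsum m (fun k => rsum n (fun i => f i k)).
Proof. induction n; simpl. rewrite rsum_zero; auto.
  rewrite IHn. rewrite <- rsum_plus. auto. Qed.

Lemma rsum_delta P j (g : nat -> R) : (j < P)%nat ->
  rsum P (fun k => if Nat.eqb k j then g k else 0) = g j.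
Proof. induction P; intros; [lia|]. simpl.
  destruct (Nat.eqb P j) eqn:E.
  - apply Nat.eqb_eq in E; subst j. rewrite (rsum_ext _ _ (fun _ => 0)). rewrite rsum_zero; lra.
    intros. destruct (Nat.eqb k P) eqn:E2; auto. apply Nat.eqb_eq in E2; lia.
  - apply Nat.eqb_neq in E. rewrite IHP by lia. lra. Qed.

Fixpoint in_pre (p : nat) (n : nat -> nat) (k : nat) : bool :=
  match p with O => false | S q => orb (in_pre q n k) (Nat.eqb k (n q)) end.

Lemma in_pre_spec p n k : in_pre p n k = true -> exists l, (l < p)%nat /\ n l = k.
Proof. induction p; simpl; intros; [discriminate|].
  apply Bool.orb_true_iff in H. destruct H. destruct (IHp H) as [l [? ?]]. exists l; split; auto; lia.
  apply Nat.eqb_eq in H. exists p; split; auto. Qed.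

Lemma distinct_sum p P (n : nat -> nat) (g : nat -> R) :
  (forall l, (l < p)%nat -> (n l < P)%nat) ->
  (forall l l', (l < l')%nat -> (l' < p)%nat -> n l <> n l') ->
  (forall k, 0 <= g k) ->
  rsum p (fun l => g (n l)) <= rsum P g.
Proof. intros Hb Hd Hg.
  assert (forall q, (q <= p)%nat -> rsum q (fun l => g (n l)) =
     rsum P (fun k => if in_pre q n k then g k else 0)).
  { induction q; intros. simpl. rewrite rsum_zero. auto.
    simpl. rewrite IHq by lia.
    rewrite <- (rsum_delta P (n q) g) by (apply Hb; lia).
    rewrite <- rsum_plus. apply rsum_ext. intros k Hk.
    destruct (in_pre q n k) eqn:E1; destruct (Nat.eqb k (n q)) eqn:E2; simpl; try lra.
    apply in_pre_spec in E1. destruct E1 as [l [? ?]]. apply Nat.eqb_eq in E2.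
    exfalso. apply (Hd l q); lia. }
  rewrite H by lia. apply rsum_le. intros. destruct (in_pre p n k); auto; lra. Qed.

Fixpoint mx (n : nat) (g : nat -> R) : R :=
  match n with O => 0 | S p => Rmax (mx p g) (g p) end.

Lemma mx_ge0 n g : 0 <= mx n g.
Proof. induction n; simpl. lra. eapply Rle_trans; [exact IHn|apply Rmax_l]. Qed.

Lemma mx_ge n g i : (i < n)%nat -> g i <= mx n g.
Proof. induction n; intros; [lia|]. simpl. destruct (Nat.eq_dec i n).
  subst. apply Rmax_r. eapply Rle_trans; [apply IHn; lia|apply Rmax_l]. Qed.

Lemma mx_lub n g c : 0 <= c -> (forall i, (i < n)%nat -> g i <= c) -> mx n g <= c.
Proof. induction n; intros; simpl; auto. apply Rmax_lub. apply IHn; auto.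
  apply H0; lia. Qed.

Lemma mx_attain n g : mx n g = 0 \/ exists i, (i < n)%nat /\ mx n g = g i.
Proof. induction n; simpl; auto. unfold Rmax. destruct (Rle_dec (mx n g) (g n)).
  right; exists n; split; auto.
  destruct IHn as [?|[i [? ?]]]; auto. right; exists i; split; auto. Qed.

Lemma Rmax_diff a b c d : Rabs (Rmax a b - Rmax c d) <= Rabs (a - c) + Rabs (b - d).
Proof. unfold Rmax. destruct (Rle_dec a b); destruct (Rle_dec c d);
  unfold Rabs; repeat destruct Rcase_abs; lra. Qed.

Lemma mx_diff n g h : Rabs (mx n g - mx n h) <= rsum n (fun i => Rabs (g i - h i)).
Proof. induction n; simpl. rewrite Rminus_0_r, Rabs_R0; lra.
  eapply Rle_trans. apply Rmax_diff. lra. Qed.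

Definition ACfam (Phi : R -> R -> R) (a b : R) : Prop :=
  forall eps, 0 < eps -> exists delta, 0 < delta /\
    forall (p : nat) (u v : nat -> R),
      (forall l, (l < p)%nat -> a <= u l /\ u l <= v l /\ v l <= b) ->
      (forall l, (S l < p)%nat -> v l <= u (S l)) ->
      rsum p (fun l => v l - u l) < delta ->
      rsum p (fun l => Phi (u l) (v l)) < eps.

Lemma AC_fam f a b : abs_continuous_on f a b -> ACfam (fun u v => Rabs (f v - f u)) a b.
Proof. intro H; exact H. Qed.

Lemma fam_AC f a b : ACfam (fun u v => Rabs (f v - f u)) a b -> abs_continuous_on f a b.
Proof. intro H; exact H. Qed.

Lemma ACfam_le Phi Psi a b :
  (forall u v, a <= u -> u <= v -> v <= b -> Phi u v <= Psi u v) ->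
  ACfam Psi a b -> ACfam Phi a b.
Proof. intros Hle H eps He. destruct (H eps He) as [d [Hd Hf]]. exists d; split; auto.
  intros. eapply Rle_lt_trans; [|apply (Hf p u v); auto].
  apply rsum_le. intros. destruct (H0 k H3) as [? [? ?]]. apply Hle; auto. Qed.

Lemma ACfam_scal Phi c a b : 0 <= c -> ACfam Phi a b -> ACfam (fun u v => c * Phi u v) a b.
Proof. intros Hc H eps He. destruct (H (eps / (c+1))) as [d [Hd Hf]].
  apply Rdiv_lt_0_compat; lra. exists d; split; auto. intros.
  rewrite rsum_scal. specialize (Hf p u v H0 H1 H2).
  assert (c * rsum p (fun l => Phi (u l) (v l)) <= c * (eps / (c+1))).
  { apply Rmult_le_compat_l; lra. }
  assert (c * (eps / (c + 1)) < eps).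
  { unfold Rdiv. rewrite <- Rmult_assoc. apply (Rmult_lt_reg_r (c+1)). lra.
    rewrite Rmult_assoc, Rinv_l by lra. nra. }
  lra. Qed.

Lemma ACfam_sum n (Phi : nat -> R -> R -> R) a b :
  (forall j, (j < n)%nat -> ACfam (Phi j) a b) ->
  ACfam (fun u v => rsum n (fun j => Phi j u v)) a b.
Proof. induction n; intros H.
  - intros eps He. exists 1; split; [lra|]. intros. simpl. rewrite rsum_zero. auto.
  - intros eps He. destruct (IHn (fun j Hj => H j (Nat.lt_lt_succ_r _ _ Hj)) (eps/2)) as [d1 [Hd1 H1]]. lra.
    destruct (H n (Nat.lt_succ_diag_r n) (eps/2)) as [d2 [Hd2 H2]]. lra.
    exists (Rmin d1 d2); split. apply Rmin_pos; auto. intros. simpl.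
    rewrite rsum_plus. specialize (H1 p u v H0 H3). specialize (H2 p u v H0 H3).
    assert (Rmin d1 d2 <= d1) by apply Rmin_l. assert (Rmin d1 d2 <= d2) by apply Rmin_r.
    assert (rsum p (fun l => rsum n (fun j => Phi j (u l) (v l))) < eps/2) by (apply H1; lra).
    assert (rsum p (fun l => Phi n (u l) (v l)) < eps/2) by (apply H2; lra). lra. Qed.

Lemma AC_sub f a b a' b' : a <= a' -> b' <= b -> abs_continuous_on f a b -> abs_continuous_on f a' b'.
Proof. intros Ha Hb H eps He. destruct (H eps He) as [d [Hd Hf]]. exists d; split; auto.
  intros. apply Hf; auto. intros. destruct (H0 l H3) as [? [? ?]]. repeat split; lra. Qed.

Lemma AC_single f a b : abs_continuous_on f a b -> forall eps, 0 < eps -> exists d, 0 < d /\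
  forall u v, a <= u -> u <= v -> v <= b -> v - u < d -> Rabs (f v - f u) < eps.
Proof. intros H eps He. destruct (H eps He) as [d [Hd Hf]]. exists d; split; auto.
  intros. specialize (Hf 1%nat (fun _ => u) (fun _ => v)). simpl in Hf.
  assert (0 + Rabs (f v - f u) < eps). apply Hf. intros; repeat split; lra. intros; lia. lra. lra. Qed.

Lemma AC_bounded f a b : a <= b -> abs_continuous_on f a b -> exists M, forall t, a <= t <= b -> Rabs (f t) <= M.
Proof. intros Hab H. destruct (AC_single f a b H 1) as [d [Hd Hf]]. lra.
  assert (forall n : nat, forall t, a <= t <= b -> t <= a + INR n * (d/2) -> Rabs (f t - f a) <= INR n).
  { induction n; intros t Ht Htn.
    - simpl in *. replace t with a by lra. rewrite Rminus_diag, Rabs_R0. lra.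
    - rewrite S_INR in *. destruct (Rle_dec t (a + INR n * (d/2))).
      + specialize (IHn t Ht r). lra.
      + set (t' := a + INR n * (d / 2)).
        assert (0 <= INR n) by apply pos_INR.
        assert (a <= t' <= b) by (unfold t'; split; nra).
        specialize (IHn t' H1 (Rle_refl _)).
        assert (Rabs (f t - f t') < 1) by (apply Hf; unfold t' in *; lra).
        replace (f t - f a) with ((f t - f t') + (f t' - f a)) by ring.
        eapply Rle_trans. apply Rabs_triang. lra. }
  destruct (archimed ((b - a) / (d/2))) as [Ha _].
  destruct (up ((b - a) / (d / 2))) eqn:E; simpl in Ha.
  - exists (Rabs (f a)). intros.
    assert ((b - a) / (d/2) >= 0). { apply Rle_ge. unfold Rdiv; apply Rmult_le_pos; [lra|left; apply Rinv_0_lt_compat; lra]. } lra.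
  - exists (Rabs (f a) + INR (Pos.to_nat p)). intros.
    assert (Rabs (f t - f a) <= INR (Pos.to_nat p)).
    { apply H0; auto. rewrite INR_IPR. 
      assert (b - a < IPR p * (d/2)).
      { apply (Rmult_lt_reg_r (/ (d/2))). apply Rinv_0_lt_compat; lra.
        rewrite Rmult_assoc, Rinv_r by lra. change (IZR (Z.pos p)) with (IPR p) in Ha. unfold Rdiv in Ha. lra. } lra. }
    replace (f t) with ((f t - f a) + f a) by ring.
    eapply Rle_trans. apply Rabs_triang. lra.
  - assert ((b - a) / (d/2) >= 0). { apply Rle_ge. unfold Rdiv; apply Rmult_le_pos; [lra|left; apply Rinv_0_lt_compat; lra]. }
    assert (IZR (Z.neg p) < 0). apply IZR_lt. lia. lra. Qed.

Fixpoint pbound (p : nat) (n : nat -> nat) : nat :=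
  match p with O => O | S q => Nat.max (pbound q n) (S (n q)) end.

Lemma pbound_spec p n l : (l < p)%nat -> (n l < pbound p n)%nat.
Proof. induction p; intros; simpl; [lia|]. destruct (Nat.eq_dec l p). subst; lia.
  specialize (IHp ltac:(lia)). lia. Qed.

Section Creep.
Variables (V : R -> R) (a B : R) (Sx : R -> Prop) (eps delta : R) (c d : nat -> R).
Hypothesis HaB : a < B.
Hypothesis Heps : 0 < eps.
Hypothesis Hdelta : 0 < delta.
Hypothesis HAC : forall (p : nat) (u v : nat -> R),
      (forall l, (l < p)%nat -> a <= u l /\ u l <= v l /\ v l <= B) ->
      (forall l, (S l < p)%nat -> v l <= u (S l)) ->
      rsum p (fun l => v l - u l) < delta ->
      rsum p (fun l => Rabs (V (v l) - V (u l))) < eps.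
Hypothesis Hcd : forall n, c n <= d n.
Hypothesis Hsum : forall p, rsum p (fun n => d n - c n) <= delta / 2.

Definition Valid (t : R) (p : nat) (u v : nat -> R) (n : nat -> nat) : Prop :=
  (forall l, (l < p)%nat -> a <= u l /\ u l <= v l /\ v l <= t /\ u l < B /\
      c (n l) < u l /\ u l < d (n l) /\ v l = Rmin (d (n l)) B) /\
  (forall l, (S l < p)%nat -> v l <= u (S l)).

Definition Q (t : R) : Prop := a <= t <= B /\ exists p u v n, Valid t p u v n /\
  V t - V a <= eps * (t - a) + rsum p (fun l => Rabs (V (v l) - V (u l))).

Lemma chain t p u v n : Valid t p u v n -> forall k l, (l + S k < p)%nat -> v l <= u (l + S k)%nat.
Proof. intros [H1 H2]. induction k; intros.
  - replace (l + 1)%nat with (S l) by lia. apply H2; lia.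
  - specialize (IHk l ltac:(lia)). destruct (H1 (l + S k)%nat ltac:(lia)) as [? [? _]].
    specialize (H2 (l + S k)%nat ltac:(lia)). replace (l + S (S k))%nat with (S (l + S k)) by lia. lra. Qed.

Lemma valid_small t p u v n : t <= B -> Valid t p u v n ->
  rsum p (fun l => Rabs (V (v l) - V (u l))) < eps.
Proof. intros Ht Hv. apply HAC.
  - intros. destruct Hv as [H1 _]. destruct (H1 l H) as [? [? [? _]]]. repeat split; lra.
  - apply Hv.
  - eapply Rle_lt_trans with (rsum p (fun l => d (n l) - c (n l))).
    + apply rsum_le. intros. destruct Hv as [H1 _]. destruct (H1 k H) as [? [? [? [? [? [? ?]]]]]].
      assert (v k <= d (n k)) by (rewrite H7; apply Rmin_l). lra.
    + eapply Rle_lt_trans. apply (distinct_sum p (pbound p n) n (fun k => d k - c k)).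
      * intros; apply pbound_spec; auto.
      * intros l l' Hl Hl' Heq. destruct Hv as [H1 H2].
        assert (v l <= u l') as Hc.
        { replace l' with (l + S (l' - l - 1))%nat by lia. apply (chain t p u v n (conj H1 H2)). lia. }
        destruct (H1 l ltac:(lia)) as [? [? [? [? [? [? Hvl]]]]]].
        destruct (H1 l' Hl') as [? [? [? [? [? [? ?]]]]]].
        rewrite Heq in Hvl. unfold Rmin in Hvl. destruct (Rle_dec (d (n l')) B); lra.
      * intros; specialize (Hcd k); lra.
      * specialize (Hsum (pbound p n)). lra. Qed.

Lemma Q_a : Q a.
Proof. split. lra. exists 0%nat, (fun _ => 0), (fun _ => 0), (fun _ => 0%nat). split.
  split; intros; lia. simpl. lra. Qed.

Lemma Q_move t t' : Q t -> t <= t' <= B -> V t' <= V t + eps * (t' - t) -> Q t'.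
Proof. unfold Q, Valid. intros [Ht [p [u [v [n [[H1 H2] H3]]]]]] Htt HV. split. lra.
  exists p, u, v, n. split. split; auto. intros l Hl. destruct (H1 l Hl) as [? [? [? ?]]]. repeat split; try tauto; lra.
  lra. Qed.

Lemma Q_ext t n0 : Q t -> t < B -> c n0 < t -> t < d n0 -> Q (Rmin (d n0) B).
Proof. unfold Q, Valid. intros [Ht [p [u [v [n [[H1 H2] H3]]]]]] HtB Hc Hd.
  assert (t <= Rmin (d n0) B) by (apply Rmin_glb; lra).
  assert (Rmin (d n0) B <= B) by apply Rmin_r.
  split. lra.
  exists (S p), (fun l => if Nat.ltb l p then u l else t),
    (fun l => if Nat.ltb l p then v l else Rmin (d n0) B),
    (fun l => if Nat.ltb l p then n l else n0).
  split. split.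
  - intros l Hl. destruct (Nat.ltb l p) eqn:E.
    + apply Nat.ltb_lt in E. destruct (H1 l E) as [? [? [? ?]]]. repeat split; try tauto; lra.
    + repeat split; lra.
  - intros l Hl. destruct (Nat.ltb l p) eqn:E; destruct (Nat.ltb (S l) p) eqn:E2.
    + apply H2. apply Nat.ltb_lt in E2; auto.
    + apply Nat.ltb_lt in E. destruct (H1 l E) as [? [? [? ?]]]. lra.
    + apply Nat.ltb_lt in E2. apply Nat.ltb_ge in E. lia.
    + apply Nat.ltb_ge in E. lia.
  - simpl. rewrite Nat.ltb_irrefl.
    rewrite (rsum_ext p _ (fun l => Rabs (V (v l) - V (u l)))).
    2:{ intros. apply Nat.ltb_lt in H4. rewrite H4. auto. }
    assert (V (Rmin (d n0) B) - V t <= Rabs (V (Rmin (d n0) B) - V t)) by apply Rle_abs.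
    assert (eps * (t - a) <= eps * (Rmin (d n0) B - a)) by (apply Rmult_le_compat_l; lra).
    lra. Qed.

Hypothesis Hcov : forall t, Sx t -> exists n, c n < t < d n.
Hypothesis Hslope : forall s, a <= s <= B -> ~ Sx s ->
   (forall e, 0 < e -> exists h, 0 < h /\ forall t, s < t < s + h -> V t <= V s + e * (t - s)) /\
   (forall e, 0 < e -> exists h, 0 < h /\ forall t, s - h < t < s -> V s <= V t + e * (s - t)).

Lemma Q_B : Q B.
Proof.
  destruct (completeness Q) as [s [Hub Hlub]].
  - exists B. intros t [Ht _]. lra.
  - exists a. apply Q_a.
  - assert (a <= s) by (apply Hub; apply Q_a).
    assert (s <= B) by (apply Hlub; intros t [Ht _]; lra).
    assert (Happ : forall y, y < s -> exists t, Q t /\ y < t /\ t <= s).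
    { intros y Hy. apply NNPP. intro Hn. assert (s <= y); [|lra].
      apply Hlub. intros t Qt. apply Rnot_lt_le. intro Hlt. apply Hn. exists t. split; [auto| split; [lra| apply Hub; auto]]. }
    destruct (classic (Sx s)) as [HS|HS].
    + destruct (Hcov s HS) as [n0 [Hc Hd]].
      destruct (Happ (c n0) Hc) as [t [Qt [Hct Hts]]].
      destruct (Req_dec t B). subst; auto.
      assert (Qv : Q (Rmin (d n0) B)). { apply (Q_ext t); auto; destruct Qt; lra. }
      unfold Rmin in *. destruct (Rle_dec (d n0) B); auto.
      assert (d n0 <= s) by (apply Hub; auto). lra.
    + assert (Qs : Q s).
      { destruct (classic (Q s)) as [Qs|Qs]; auto.
        destruct (Hslope s (conj H H0) HS) as [_ Hl].
        destruct (Hl eps Heps) as [h [Hh Hl2]].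
        destruct (Happ (s - h) ltac:(lra)) as [t [Qt [Ht1 Ht2]]].
        destruct (Req_dec t s). subst; auto.
        apply (Q_move t s Qt). split; lra. specialize (Hl2 t ltac:(lra)). lra. }
      destruct (Req_dec s B). subst; auto.
      destruct (Hslope s (conj H H0) HS) as [Hr _].
      destruct (Hr eps Heps) as [h [Hh Hr2]].
      set (t := Rmin (s + h/2) B).
      assert (s < t). { unfold t, Rmin; destruct Rle_dec; lra. }
      assert (t <= B) by apply Rmin_r. assert (t <= s + h/2) by apply Rmin_l.
      assert (Q t). { apply (Q_move s); auto. lra. apply Hr2; lra. }
      assert (t <= s) by (apply Hub; auto). lra.
Qed.

End Creep.


Lemma creep (V : R -> R) (a B : R) (Sx : R -> Prop) :
  a < B -> null_set Sx -> abs_continuous_on V a B ->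
  (forall s, a <= s <= B -> ~ Sx s ->
   (forall e, 0 < e -> exists h, 0 < h /\ forall t, s < t < s + h -> V t <= V s + e * (t - s)) /\
   (forall e, 0 < e -> exists h, 0 < h /\ forall t, s - h < t < s -> V s <= V t + e * (s - t))) ->
  V B <= V a.
Proof. intros HaB Hnull HAC Hsl.
  assert (forall eps, 0 < eps -> V B - V a < eps * (B - a) + eps).
  { intros eps He. destruct (HAC eps He) as [delta [Hd Hf]].
    destruct (Hnull (delta/2) ltac:(lra)) as [c [d [Hcd [Hs Hcov]]]].
    destruct (Q_B V a B Sx eps c d HaB He Hcov Hsl) as [_ [p [u [v [n [Hv H3]]]]]].
    pose proof (valid_small V a B eps delta c d Hd Hf Hcd Hs B p u v n (Rle_refl _) Hv). lra. }
  apply Rnot_lt_le. intro Hlt.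
  specialize (H ((V B - V a) / (B - a + 1))).
  assert (0 < (V B - V a) / (B - a + 1)) by (apply Rdiv_lt_0_compat; lra).
  specialize (H H0).
  assert ((V B - V a) / (B - a + 1) * (B - a) + (V B - V a) / (B - a + 1) = V B - V a).
  { field. lra. } lra. Qed.

Definition slope_ok (V : R -> R) (s : R) : Prop :=
   (forall e, 0 < e -> exists h, 0 < h /\ forall t, s < t < s + h -> V t <= V s + e * (t - s)) /\
   (forall e, 0 < e -> exists h, 0 < h /\ forall t, s - h < t < s -> V s <= V t + e * (s - t)).

Lemma mono_from V t0 T Sx : t0 <= T -> null_set Sx -> abs_continuous_on V t0 T ->
  (forall s, t0 < s <= T -> ~ Sx s -> slope_ok V s) -> V T <= V t0.
Proof. intros HT Hn HAC Hs. destruct (Req_dec T t0). subst; lra.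
  apply Rnot_lt_le. intro Hlt.
  destruct (AC_single V t0 T HAC (V T - V t0)) as [dl [Hdl Hf]]. lra.
  set (a' := t0 + Rmin dl (T - t0) / 2).
  assert (Rmin dl (T - t0) <= dl) by apply Rmin_l.
  assert (Rmin dl (T - t0) <= T - t0) by apply Rmin_r.
  assert (0 < Rmin dl (T - t0)) by (apply Rmin_pos; lra).
  assert (V T <= V a').
  { apply (creep V a' T Sx). unfold a'; lra. auto. apply (AC_sub V t0 T a' T); [unfold a'; lra | lra | auto].
    intros. apply Hs; auto. unfold a' in *; lra. }
  assert (Rabs (V a' - V t0) < V T - V t0) by (apply Hf; unfold a'; lra).
  unfold Rabs in H4; destruct Rcase_abs in H4; lra. Qed.

Lemma deriv_slope f s l : derivable_pt_lim f s l -> l <= 0 -> slope_ok f s.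
Proof. intros Hd Hl. split; intros e He; destruct (Hd e He) as [dl Hdl];
  exists dl; split; try apply cond_pos; intros t Ht.
  - specialize (Hdl (t - s) ltac:(lra)). replace (s + (t - s)) with t in Hdl by ring.
    assert (Rabs (t - s) < dl) by (rewrite Rabs_pos_eq; lra). specialize (Hdl H).
    set (q := (f t - f s) / (t - s)) in Hdl.
    assert (f t - f s = q * (t - s)) by (unfold q; field; lra).
    apply Rabs_def2 in Hdl. nra.
  - specialize (Hdl (t - s) ltac:(lra)). replace (s + (t - s)) with t in Hdl by ring.
    assert (Rabs (t - s) < dl) by (rewrite Rabs_left; lra). specialize (Hdl H).
    set (q := (f t - f s) / (t - s)) in Hdl.
    assert (f t - f s = q * (t - s)) by (unfold q; field; lra).
    apply Rabs_def2 in Hdl. nra. Qed.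

Lemma deriv_cont f s l : derivable_pt_lim f s l -> forall e, 0 < e -> exists h, 0 < h /\
  forall t, Rabs (t - s) < h -> Rabs (f t - f s) < e.
Proof. intros Hd e He. destruct (Hd 1 ltac:(lra)) as [dl Hdl].
  exists (Rmin dl (e / (Rabs l + 1))). split. apply Rmin_pos. apply cond_pos.
  apply Rdiv_lt_0_compat; auto. pose proof (Rabs_pos l); lra.
  intros t Ht. destruct (Req_dec t s). subst. rewrite Rminus_diag, Rabs_R0; auto.
  assert (Rmin dl (e / (Rabs l + 1)) <= dl) by apply Rmin_l.
  assert (Rmin dl (e / (Rabs l + 1)) <= e / (Rabs l + 1)) by apply Rmin_r.
  specialize (Hdl (t - s) ltac:(lra) ltac:(lra)). replace (s + (t - s)) with t in Hdl by ring.
  set (q := (f t - f s) / (t - s)) in Hdl.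
  assert (f t - f s = q * (t - s)) by (unfold q; field; lra).
  rewrite H2, Rabs_mult.
  assert (Rabs q < Rabs l + 1).
  { replace q with ((q - l) + l) by ring. eapply Rle_lt_trans. apply Rabs_triang. lra. }
  assert (Rabs (t - s) * (Rabs l + 1) < e).
  { apply (Rmult_lt_reg_r (/ (Rabs l + 1))). apply Rinv_0_lt_compat. pose proof (Rabs_pos l); lra.
    rewrite Rmult_assoc, Rinv_r. unfold Rdiv in H1. lra. pose proof (Rabs_pos l); lra. }
  pose proof (Rabs_pos q). pose proof (Rabs_pos (t - s)). nra. Qed.

Lemma mx_slope (n : nat) (g : nat -> R -> R) (s : R) :
  (forall i, (i < n)%nat -> exists l, derivable_pt_lim (g i) s l /\
      (g i s = mx n (fun j => g j s) -> l <= 0)) ->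
  slope_ok (fun t => mx n (fun j => g j t)) s.
Proof. intros Hg. set (M := mx n (fun j => g j s)).
  assert (HM0 : 0 <= M) by apply mx_ge0.
  assert (HMi : forall i, (i < n)%nat -> g i s <= M) by (intros; apply (mx_ge n (fun j => g j s)); auto).
  split.
  - intros e He.
    assert (forall k, (k <= n)%nat -> exists h, 0 < h /\ forall t, s < t < s + h ->
              mx k (fun j => g j t) <= M + e * (t - s)).
    { induction k; intros Hk.
      - exists 1; split; [lra|]. intros; simpl; nra.
      - destruct (IHk ltac:(lia)) as [h1 [Hh1 H1]].
        destruct (Hg k ltac:(lia)) as [l [Hd Hl]].
        assert (exists h2, 0 < h2 /\ forall t, s < t < s + h2 -> g k t <= M + e * (t - s)).
        { destruct (Req_dec (g k s) M).
          - destruct (deriv_slope _ _ _ Hd (Hl H)) as [Hr _]. destruct (Hr e He) as [h2 [Hh2 H2]].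
            exists h2; split; auto. intros. rewrite <- H. apply H2; auto.
          - assert (g k s < M) by (specialize (HMi k ltac:(lia)); lra).
            destruct (deriv_cont _ _ _ Hd (M - g k s)) as [h2 [Hh2 H2]]. lra.
            exists h2; split; auto. intros. assert (Rabs (t - s) < h2) by (rewrite Rabs_pos_eq; lra).
            specialize (H2 t H4). apply Rabs_def2 in H2. nra. }
        destruct H as [h2 [Hh2 H2]].
        exists (Rmin h1 h2). split. apply Rmin_pos; auto. intros t Ht.
        assert (Rmin h1 h2 <= h1) by apply Rmin_l. assert (Rmin h1 h2 <= h2) by apply Rmin_r.
        simpl. apply Rmax_lub. apply H1. split; lra. apply H2. split; lra. }
    apply H. lia.
  - intros e He. destruct (mx_attain n (fun j => g j s)) as [H0|[i [Hi Heq]]].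
    + exists 1; split; [lra|]. intros t Ht. pose proof (mx_ge0 n (fun j => g j t)) as Hp. assert (M = 0) as HM by exact H0. unfold M in HM; rewrite HM. assert (0 < e * (s - t)) by (apply Rmult_lt_0_compat; lra). lra.
    + destruct (Hg i Hi) as [l [Hd Hl]]. destruct (deriv_slope _ _ _ Hd (Hl (eq_sym Heq))) as [_ Hlf].
      destruct (Hlf e He) as [h [Hh H]]. exists h; split; auto. intros.
      specialize (H t H0). pose proof (mx_ge n (fun j => g j t) i Hi). simpl in *.
      rewrite Heq. lra. Qed.

Lemma deriv_ext f g s l : (forall t, f t = g t) -> derivable_pt_lim f s l -> derivable_pt_lim g s l.
Proof. intros He Hd eps Heps. destruct (Hd eps Heps) as [dl Hdl]. exists dl. intros.
  rewrite <- !He. auto. Qed.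

Lemma deriv_rsum n (f : nat -> R -> R) s (l : nat -> R) :
  (forall k, (k < n)%nat -> derivable_pt_lim (f k) s (l k)) ->
  derivable_pt_lim (fun t => rsum n (fun k => f k t)) s (rsum n l).
Proof. induction n; intros H; simpl.
  - apply (deriv_ext (fct_cte 0)). intros; reflexivity. apply derivable_pt_lim_const.
  - apply (deriv_ext (plus_fct (fun t => rsum n (fun k => f k t)) (f n))). intros; reflexivity.
    apply derivable_pt_lim_plus. apply IHn. intros; apply H; lia. apply H; lia. Qed.

Lemma deriv_sq f c s l : derivable_pt_lim f s l ->
  derivable_pt_lim (fun t => (f t - c) ^ 2) s (2 * (f s - c) * l).
Proof. intros Hd.
  assert (H1 : derivable_pt_lim (fun t => f t - c) s l).
  { apply (deriv_ext (f - fct_cte c)%F). intros; reflexivity.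
    replace l with (l - 0) by ring. apply derivable_pt_lim_minus; auto. apply derivable_pt_lim_const. }
  apply (deriv_ext (mult_fct (fun t => f t - c) (fun t => f t - c))). intros. unfold mult_fct. ring.
  pose proof (derivable_pt_lim_mult _ _ s l l H1 H1) as Hm. cbv beta in Hm.
  replace (l * (f s - c) + (f s - c) * l) with (2*(f s - c)*l) in Hm by ring. exact Hm. Qed.

Lemma deriv_scal f a s l : derivable_pt_lim f s l -> derivable_pt_lim (fun t => a * f t) s (a * l).
Proof. intros. apply (deriv_ext (mult_real_fct a f)). intros; reflexivity.
  apply derivable_pt_lim_scal; auto. Qed.

Lemma deriv_minus_c f c s l : derivable_pt_lim f s l -> derivable_pt_lim (fun t => f t - c) s l.
Proof. intros. apply (deriv_ext (f - fct_cte c)%F). intros; reflexivity.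
  replace l with (l - 0) by ring. apply derivable_pt_lim_minus; auto. apply derivable_pt_lim_const. Qed.

Lemma AC_sq f c a b : a <= b -> abs_continuous_on f a b -> abs_continuous_on (fun t => (f t - c) ^ 2) a b.
Proof. intros Hab H. destruct (AC_bounded f a b Hab H) as [M HM].
  apply fam_AC. apply (ACfam_le _ (fun u v => (2 * M + 2 * Rabs c) * Rabs (f v - f u))).
  - intros u v Hu Huv Hv. specialize (HM u ltac:(lra)) as Hu'. specialize (HM v ltac:(lra)) as Hv'.
    replace ((f v - c) ^ 2 - (f u - c) ^ 2) with ((f v - f u) * (f v + f u - 2 * c)) by ring.
    rewrite Rabs_mult.
    assert (Rabs (f v + f u - 2 * c) <= 2 * M + 2 * Rabs c).
    { unfold Rminus. eapply Rle_trans. apply Rabs_triang. rewrite Rabs_Ropp, Rabs_mult, (Rabs_pos_eq 2) by lra.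
      pose proof (Rabs_triang (f v) (f u)). lra. }
    rewrite (Rmult_comm (2 * M + 2 * Rabs c)). apply Rmult_le_compat_l. apply Rabs_pos. auto.
  - apply ACfam_scal. pose proof (Rabs_pos c). pose proof (HM a ltac:(lra)). pose proof (Rabs_pos (f a)). lra.
    apply AC_fam; auto. Qed.

Lemma swap_nbr N m (b : nat -> bool) (al cc : nat -> R) (w : nat -> nat -> R) :
  rsum m (fun k => cc k * rsum N (fun j => if b j then al j * w j k else 0)) =
  rsum N (fun j => if b j then al j * rsum m (fun k => cc k * w j k) else 0).
Proof.
  rewrite (rsum_ext m _ (fun k => rsum N (fun j => if b j then al j * (cc k * w j k) else 0))).
  2:{ intros. rewrite <- rsum_scal. apply rsum_ext; intros. destruct (b k0); ring. }
  rewrite rsum_swap. apply rsum_ext; intros. destruct (b k).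
  rewrite rsum_scal; auto. apply rsum_zero. Qed.

Lemma cross_le m (X Y ys : nat -> R) :
  rsum m (fun k => (X k - ys k) * (Y k - X k)) <= / 2 * (dist2 m Y ys - dist2 m X ys).
Proof. unfold dist2. rewrite <- rsum_minus, <- rsum_scal. apply rsum_le. intros.
  assert (0 <= (Y k - X k) ^ 2) by (apply pow2_ge_0). nra. Qed.

Lemma dot_minus m h X ys : dot m h X - dot m h ys = rsum m (fun k => h k * (X k - ys k)).
Proof. unfold dot. rewrite <- rsum_minus. apply rsum_ext; intros; ring. Qed.

Lemma cp_deriv_nonpos N m H z E a K s X ys i :
  (i < N)%nat -> 0 < K -> (forall j, (j < N)%nat -> 0 <= a i j s) ->
  dot m (H i) ys = z i ->
  (forall j, (j < N)%nat -> dist2 m (X j) ys <= dist2 m (X i) ys) ->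
  rsum m (fun k => 2 * (X i k - ys k) * cons_proj_field N m H z E a K s X i k) <= 0.
Proof. intros Hi HK Ha Hz Hd. unfold cons_proj_field, nbr_sum, projA.
  set (al := dot m (H i) (X i) - z i).
  rewrite (rsum_ext m _ (fun k => (2 * K) * ((X i k - ys k) *
     rsum N (fun j => if E s j i then a i j s * (X j k - X i k) else 0)) +
     (- 2 * al) * (H i k * (X i k - ys k)))).
  2:{ intros. unfold al. ring. }
  rewrite rsum_plus, !rsum_scal, swap_nbr.
  assert (rsum N (fun j => if E s j i then a i j s * rsum m (fun k => (X i k - ys k) * (X j k - X i k)) else 0) <= 0).
  { apply rsum_nonpos. intros j Hj. destruct (E s j i); [|lra].
    pose proof (cross_le m (X i) (X j) ys). specialize (Hd j Hj). specialize (Ha j Hj).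
    assert (rsum m (fun k => (X i k - ys k) * (X j k - X i k)) <= 0) by lra. nra. }
  assert (al = rsum m (fun k => H i k * (X i k - ys k))) by (unfold al; rewrite <- Hz; apply dot_minus).
  rewrite <- H1. nra. Qed.

Lemma AC_V N m (x : R -> nat -> nat -> R) ys t0 T : t0 <= T ->
  (forall i k, (i < N)%nat -> (k < m)%nat -> abs_continuous_on (fun t => x t i k) t0 T) ->
  abs_continuous_on (fun t => mx N (fun i => dist2 m (x t i) ys)) t0 T.
Proof. intros HT Hac. apply fam_AC.
  apply (ACfam_le _ (fun u v => rsum N (fun i => rsum m (fun k =>
      Rabs ((x v i k - ys k) ^ 2 - (x u i k - ys k) ^ 2))))).
  - intros u v _ _ _. eapply Rle_trans. apply mx_diff. apply rsum_le. intros i Hi.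
    unfold dist2. rewrite <- rsum_minus. apply rsum_abs.
  - apply ACfam_sum. intros i Hi. apply ACfam_sum. intros k Hk.
    apply (AC_fam (fun t => (x t i k - ys k) ^ 2)). apply AC_sq; auto. Qed.

Lemma part1 N m H z E a K ys r :
  (forall i, (i < N)%nat -> mat_vec m H ys i = z i) -> 0 < r ->
  weights_assumption N a -> 0 < K ->
  positively_invariant N m (cons_proj_field N m H z E a K) (ballN N m ys r).
Proof. intros Hys Hr [astar [Has Hw]] HK t0 x Ht0 [Hac [Sx [Hnull Hder]]] Hb0 T HT.
  set (V := fun t => mx N (fun i => dist2 m (x t i) ys)).
  assert (V T <= V t0).
  { apply (mono_from V t0 T Sx HT Hnull). apply AC_V; auto.
    intros s Hs HS. apply mx_slope. intros i Hi.
    exists (rsum m (fun k => 2 * (x s i k - ys k) * cons_proj_field N m H z E a K s (x s) i k)).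
    split.
    - unfold dist2. apply (deriv_rsum m (fun k t => (x t i k - ys k) ^ 2)). intros k Hk.
      apply deriv_sq. apply Hder; auto. lra.
    - intros Heq. apply cp_deriv_nonpos; auto.
      + intros j Hj. destruct (Hw i j Hi Hj) as [Hp _]. specialize (Hp s ltac:(lra)). lra.
      + apply Hys; auto.
      + intros j Hj. rewrite Heq. apply (mx_ge N (fun j => dist2 m (x s j) ys)); auto. }
  assert (V t0 <= r ^ 2). { apply mx_lub. apply pow2_ge_0. auto. }
  intros i Hi. pose proof (mx_ge N (fun j => dist2 m (x T j) ys) i Hi). unfold V in *. lra. Qed.

Lemma hP m H z i y : dot m (H i) (H i) = 1 ->
  rsum m (fun k => H i k * projA m H z i y k) = z i.
Proof. intros Hh. unfold projA.
  rewrite (rsum_ext m _ (fun k => (H i k * y k + (- dot m (H i) y) * (H i k * H i k)) + z i * (H i k * H i k))).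
  2:{ intros; ring. }
  rewrite !rsum_plus, !rsum_scal. unfold dot in *. rewrite Hh. ring. Qed.

Lemma pc_h_zero N m H z E a s X i : dot m (H i) (H i) = 1 ->
  rsum m (fun k => H i k * proj_cons_field N m H z E a s X i k) = 0.
Proof. intros Hh. unfold proj_cons_field, nbr_sum. rewrite swap_nbr.
  transitivity (rsum N (fun _ => 0)); [|apply rsum_zero]. apply rsum_ext. intros j Hj. destruct (E s j i); auto.
  rewrite (rsum_ext m _ (fun k => H i k * projA m H z i (X j) k - H i k * projA m H z i (X i) k)).
  2:{ intros; ring. }
  rewrite rsum_minus, !hP by auto. ring. Qed.

Lemma pc_deriv_nonpos N m H z E a s X ys i :
  (i < N)%nat -> (forall j, (j < N)%nat -> 0 <= a i j s) ->
  dot m (H i) ys = z i -> dot m (H i) (H i) = 1 -> dot m (H i) (X i) = z i ->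
  (forall j, (j < N)%nat -> dist2 m (X j) ys <= dist2 m (X i) ys) ->
  rsum m (fun k => 2 * (X i k - ys k) * proj_cons_field N m H z E a s X i k) <= 0.
Proof. intros Hi Ha Hz Hh Hxi Hd. unfold proj_cons_field, nbr_sum.
  rewrite (rsum_ext m _ (fun k => 2 * ((X i k - ys k) * rsum N (fun j => if E s j i then
     a i j s * (projA m H z i (X j) k - projA m H z i (X i) k) else 0)))).
  2:{ intros; ring. }
  rewrite rsum_scal, swap_nbr.
  assert (rsum N (fun j => if E s j i then a i j s * rsum m (fun k => (X i k - ys k) *
     (projA m H z i (X j) k - projA m H z i (X i) k)) else 0) <= 0).
  2:{ lra. }
  apply rsum_nonpos. intros j Hj. destruct (E s j i); [|lra].
  specialize (Ha j Hj). specialize (Hd j Hj).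
  set (al := dot m (H i) (X j) - z i).
  assert (Hal : al = rsum m (fun k => H i k * (X j k - ys k))) by (unfold al; rewrite <- Hz; apply dot_minus).
  assert (rsum m (fun k => (X i k - ys k) * (projA m H z i (X j) k - projA m H z i (X i) k)) <=
          rsum m (fun k => / 2 * (((X j k - ys k) - H i k * al) ^ 2 - (X i k - ys k) ^ 2))).
  { apply rsum_le. intros k Hk. unfold projA. rewrite Hxi. unfold al.
    set (e := X i k - ys k). set (q := (X j k - ys k) - H i k * (dot m (H i) (X j) - z i)).
    replace (X j k - H i k * dot m (H i) (X j) + z i * H i k - (X i k - H i k * z i + z i * H i k)) with (q - e)
      by (unfold q, e; ring).
    pose proof (pow2_ge_0 (q - e)). nra. }
  assert (rsum m (fun k => / 2 * (((X j k - ys k) - H i k * al) ^ 2 - (X i k - ys k) ^ 2)) =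
          / 2 * (dist2 m (X j) ys - al * al - dist2 m (X i) ys)).
  { rewrite rsum_scal, rsum_minus. unfold dist2.
    rewrite (rsum_ext m (fun k => (X j k - ys k - H i k * al) ^ 2)
       (fun k => ((X j k - ys k) ^ 2 + (- 2 * al) * (H i k * (X j k - ys k))) + (al * al) * (H i k * H i k))).
    2:{ intros; ring. }
    rewrite !rsum_plus, !rsum_scal. rewrite <- Hal. unfold dot in Hh. rewrite Hh. ring. }
  assert (0 <= al * al) by nra. nra. Qed.

Lemma AC_phi m (x : R -> nat -> nat -> R) (h : nat -> R) c i t0 T :
  (forall k, (k < m)%nat -> abs_continuous_on (fun t => x t i k) t0 T) ->
  abs_continuous_on (fun t => dot m h (x t i) - c) t0 T.
Proof. intros Hac. apply fam_AC.
  apply (ACfam_le _ (fun u v => rsum m (fun k => Rabs (h k) * Rabs (x v i k - x u i k)))).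
  - intros u v _ _ _. unfold dot.
    replace (rsum m (fun k => h k * x v i k) - c - (rsum m (fun k => h k * x u i k) - c))
      with (rsum m (fun k => h k * (x v i k - x u i k))).
    2:{ rewrite (rsum_ext _ _ (fun k => h k * x v i k - h k * x u i k)) by (intros; ring). rewrite rsum_minus. ring. }
    eapply Rle_trans. apply rsum_abs. apply rsum_le; intros. rewrite Rabs_mult. lra.
  - apply ACfam_sum. intros k Hk. apply ACfam_scal. apply Rabs_pos. apply AC_fam; auto. Qed.

Lemma part2 N m H z E a ys r :
  (forall i, (i < N)%nat -> dot m (H i) (H i) = 1) ->
  (forall i, (i < N)%nat -> mat_vec m H ys i = z i) ->
  weights_assumption N a ->
  positively_invariant N m (proj_cons_field N m H z E a) (ballN_A N m H z ys r).
Proof. intros Hh Hys [astar [Has Hw]] t0 x Ht0 [Hac [Sx [Hnull Hder]]] [Hb0 HA0] T HT.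
  assert (HinA : forall t, t0 <= t -> forall i, (i < N)%nat -> inA m H z i (x t i)).
  { intros t Ht i Hi. set (phi := fun t => dot m (H i) (x t i) - z i).
    assert (Hd : forall s, t0 < s -> ~ Sx s -> derivable_pt_lim phi s 0).
    { intros s Hs HS. unfold phi, dot. apply deriv_minus_c.
      rewrite <- (pc_h_zero N m H z E a s (x s) i (Hh i Hi)).
      apply (deriv_rsum m (fun k t => H i k * x t i k)). intros k Hk.
      apply deriv_scal. apply Hder; auto. }
    assert (HAC : abs_continuous_on phi t0 t) by (apply AC_phi; intros; apply Hac; auto).
    assert (phi t <= phi t0).
    { apply (mono_from phi t0 t Sx Ht Hnull HAC). intros s Hs HS.
      apply (deriv_slope _ _ 0); [apply Hd; auto; lra | lra]. }
    assert (-1 * phi t <= -1 * phi t0).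
    { apply (mono_from (fun t => -1 * phi t) t0 t Sx Ht Hnull).
      - apply fam_AC. apply (ACfam_le _ (fun u v => Rabs (phi v - phi u))).
        intros. replace (-1 * phi v - -1 * phi u) with (- (phi v - phi u)) by ring.
        rewrite Rabs_Ropp. lra. apply AC_fam; auto.
      - intros s Hs HS. apply (deriv_slope _ _ (-1 * 0)). apply deriv_scal. apply Hd; auto; lra. lra. }
    assert (phi t0 = 0) by (unfold phi; rewrite (HA0 i Hi); ring).
    unfold inA. assert (Hp0 : phi t = 0) by lra. unfold phi in Hp0. lra. }
  split; [|intros; apply HinA; auto].
  set (V := fun t => mx N (fun i => dist2 m (x t i) ys)).
  assert (V T <= V t0).
  { apply (mono_from V t0 T Sx HT Hnull). apply AC_V; auto.
    intros s Hs HS. apply mx_slope. intros i Hi.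
    exists (rsum m (fun k => 2 * (x s i k - ys k) * proj_cons_field N m H z E a s (x s) i k)).
    split.
    - unfold dist2. apply (deriv_rsum m (fun k t => (x t i k - ys k) ^ 2)). intros k Hk.
      apply deriv_sq. apply Hder; auto. lra.
    - intros Heq. apply pc_deriv_nonpos; auto.
      + intros j Hj. destruct (Hw i j Hi Hj) as [Hp _]. specialize (Hp s ltac:(lra)). lra.
      + apply Hys; auto.
      + apply HinA; auto; lra.
      + intros j Hj. rewrite Heq. apply (mx_ge N (fun j => dist2 m (x s j) ys)); auto. }
  assert (V t0 <= r ^ 2). { apply mx_lub. apply pow2_ge_0. auto. }
  intros i Hi. pose proof (mx_ge N (fun j => dist2 m (x T j) ys) i Hi). unfold V in *. lra. Qed.

Theorem lemma6 (N m : nat) (H : nat -> nat -> R) (z : nat -> R) :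
  (1 <= N)%nat -> (1 <= m)%nat ->
  (* rows of H have unit norm *)
  (forall i, (i < N)%nat -> dot m (H i) (H i) = 1) ->
  (* Case (I) or Case (II): z lies in the column space of H *)
  (exists y : nat -> R, forall i, (i < N)%nat -> mat_vec m H y i = z i) ->
  forall (ys : nat -> R),
  (* ys is a solution of z = H y *)
  (forall i, (i < N)%nat -> mat_vec m H ys i = z i) ->
  forall r : R, 0 < r ->
  forall (E : graph_signal) (a : weights), weights_assumption N a ->
  forall K : R, 0 < K ->
    positively_invariant N m (cons_proj_field N m H z E a K) (ballN N m ys r)
    /\ positively_invariant N m (proj_cons_field N m H z E a)
         (ballN_A N m H z ys r).
Proof.
  intros HN Hm Hh _ ys Hys r Hr E a Ha K HK. split.
  - apply part1; auto.
  - apply part2; auto.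
Qed.
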